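(* Let $\{t_k\}_{k\ge1}$ and $\{\xi_k\}_{k\ge1}$ be two sequences in $[1,+\infty)$. Assume that $\{t_k^2\xi_k\}$ is nondecreasing, $t_k^2\xi_k\to+\infty$, and $t_{k+1}^2\xi_{k+1}-t_k^2\xi_k\le\rho t_{k+1}\xi_{k+1}$ for all $k\ge1$, for some $0<\rho\le1$. Then $\sum_{k=1}^{+\infty}\frac1{t_k}=+\infty$. *)

(* Defs.v *)
From Stdlib Require Import Reals.
From Coquelicot Require Import Coquelicot.

(* Main.v *)
Require Import Defs.
From Stdlib Require Import Reals.
From Coquelicot Require Import Coquelicot.
From Stdlib Require Import Lra Lia Psatz.
Open Scope R_scope.

Theorem lemmaA6 (t xi : nat -> R) (rho : R) :
  (forall k, (1 <= k)%nat -> 1 <= t k) ->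
  (forall k, (1 <= k)%nat -> 1 <= xi k) ->
  (forall k, (1 <= k)%nat -> t k ^ 2 * xi k <= t (S k) ^ 2 * xi (S k)) ->
  is_lim_seq (fun k => t k ^ 2 * xi k) p_infty ->
  0 < rho -> rho <= 1 ->
  (forall k, (1 <= k)%nat ->
     t (S k) ^ 2 * xi (S k) - t k ^ 2 * xi k <= rho * t (S k) * xi (S k)) ->
  is_lim_seq (fun n => sum_f_R0 (fun k => / t (S k)) n) p_infty.
Proof.
  intros Ht Hxi Hmon Hlim Hr0 Hr1 Hstep.
  pose (av := fun k => t k ^ 2 * xi k).
  pose (Sm := fun n => sum_f_R0 (fun k => / t (S k)) n).
  assert (Hapos : forall k, (1 <= k)%nat -> 1 <= av k).
  { intros k Hk. unfold av. pose proof (Ht k Hk). pose proof (Hxi k Hk).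
    assert (1 <= t k ^ 2) by nra. nra. }
  assert (Hinvpos : forall k, 0 < / t (Datatypes.S k)).
  { intro k. apply Rinv_0_lt_compat. pose proof (Ht (Datatypes.S k) ltac:(lia)). lra. }
  assert (Smono : forall p d, Sm p <= Sm (p + d)%nat).
  { intros p d. induction d. rewrite Nat.add_0_r. lra.
    rewrite Nat.add_succ_r. unfold Sm in *. simpl. pose proof (Hinvpos (Datatypes.S (p + d))). lra. }
  assert (Key : forall p d, av (p + 1 + d)%nat * (Sm (p + d)%nat - Sm p) >= av (p + 1 + d)%nat - av (p + 1)%nat).
  { intros p d. induction d.
    - rewrite !Nat.add_0_r. lra.
    - replace (p + 1 + Datatypes.S d)%nat with (Datatypes.S (p + 1 + d)) by lia.
      replace (p + Datatypes.S d)%nat with (Datatypes.S (p + d)) by lia.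
      pose (k := (p + 1 + d)%nat).
      assert (Hk : (1 <= k)%nat) by (unfold k; lia).
      assert (E : Sm (Datatypes.S (p + d)) = Sm (p + d)%nat + / t (Datatypes.S k)).
      { unfold Sm. simpl. unfold k. replace (p+1+d)%nat with (Datatypes.S (p + d)) by lia. reflexivity. }
      rewrite E.
      pose proof (Smono p d) as HD.
      pose proof (Hmon k Hk) as Hm. pose proof (Hstep k Hk) as Hs.
      pose proof (Ht (Datatypes.S k) ltac:(lia)) as Ht1.
      pose proof (Hxi (Datatypes.S k) ltac:(lia)) as Hx1.
      fold (av k) in Hm, Hs. fold (av (Datatypes.S k)) in Hm, Hs.
      assert (Ea : av (Datatypes.S k) * / t (Datatypes.S k) = t (Datatypes.S k) * xi (Datatypes.S k)).
      { unfold av. field. lra. }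
      assert (Hx : av (Datatypes.S k) - av k <= t (Datatypes.S k) * xi (Datatypes.S k)).
      { assert (0 <= t (Datatypes.S k) * xi (Datatypes.S k)) by nra. nra. }
      assert (av (Datatypes.S k) * (Sm (p+d)%nat - Sm p) >= av k * (Sm (p+d)%nat - Sm p)) by nra.
      fold k in IHd |- *.
      replace (av (Datatypes.S k) * (Sm (p + d)%nat + / t (Datatypes.S k) - Sm p)) with
        (av (Datatypes.S k) * (Sm (p + d)%nat - Sm p) + av (Datatypes.S k) * / t (Datatypes.S k)) by ring.
      lra. }
  apply is_lim_seq_spec in Hlim.
  assert (Blocks : forall j : nat, exists N, INR j <= 2 * Sm N).
  { induction j.
    - exists 0%nat. simpl. unfold Sm. simpl. pose proof (Hinvpos 0%nat). lra.
    - destruct IHj as [N HN].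
      destruct (Hlim (2 * av (N + 1)%nat)) as [M HM].
      pose (d := M).
      specialize (HM (N + 1 + d)%nat ltac:(unfold d; lia)). simpl in HM.
      pose proof (Key N d) as HK.
      pose proof (Hapos (N+1)%nat ltac:(lia)).
      assert (Sm (N + d)%nat - Sm N >= 1/2).
      { assert (HM2 : 2 * av (N + 1)%nat < av (N+1+d)%nat) by exact HM.
        assert (av (N+1+d)%nat * (Sm (N + d)%nat - Sm N) >= av (N+1+d)%nat * (1/2)) by lra.
        apply Rle_ge; apply Rmult_le_reg_l with (av (N+1+d)%nat); lra. }
      exists (N + d)%nat. rewrite S_INR. lra. }
  apply is_lim_seq_spec. intro M.
  destruct (INR_unbounded (2 * M)) as [j Hj].
  destruct (Blocks j) as [N HN].
  exists N. intros n Hn.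
  replace n with (N + (n - N))%nat by lia.
  pose proof (Smono N (n - N)%nat). change (M < Sm (N + (n - N))%nat). lra.
Qed.
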